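(* Let $G$ be a $3$-regular graph and $\sigma$ a permutation of $E(G)$. Then $B(G,\sigma)$ is not odd if and only if there is a nonempty $2$-regular set of edges $C\subseteq E(G)$ in $G$ such that $\sigma(C)$ is also $2$-regular in $G$.
   Context: All graphs are finite, simple and undirected. A set of edges $C\subseteq E(G)$ is $2$-regular in $G$ if every vertex of $G$ is incident with exactly $0$ or exactly $2$ edges of $C$. $B(G,\sigma)$ is the bipartite graph with parts $V_B=V(G)\times\{0,1\}$ and $W_B=E(G)$ and edge set $\{\{(v,0),e\}: v\in e\}\cup\{\{(v,1),e\}: v\in\sigma(e)\}$. A bipartite graph with parts $V,W$ in which every vertex of $V$ has degree $3$ is called odd if for every nonempty $X\subseteq W$ there is some $v\in V$ with $|X\cap N(v)|$ odd; otherwise it is called even (not odd). *)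

(* Defs.v *)
From mathcomp Require Import all_boot all_fingroup.
Set Implicit Arguments. Unset Strict Implicit. Unset Printing Implicit Defensive.

Definition simple_graph (V : finType) (g : rel V) : Prop :=
  symmetric g /\ irreflexive g.

Definition is_edge (V : finType) (g : rel V) (e : {set V}) : bool :=
  (#|e| == 2) && [forall x in e, forall y in e, (x != y) ==> g x y].

Definition edge (V : finType) (g : rel V) : finType :=
  {e : {set V} | is_edge g e}.

Definition cubic (V : finType) (g : rel V) : Prop :=
  forall v : V, #|[set w | g v w]| = 3.

Definition two_regular (V : finType) (g : rel V) (C : {set edge g}) : Prop :=
  forall v : V, let d := #|[set e in C | v \in val e]| in d = 0 \/ d = 2.

(* Adjacency of B(G, sigma): vertex (v, b) of V x {0,1} and edge e of G.
   b = false stands for 0, b = true for 1. *)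
Definition B_adj (V : finType) (g : rel V) (sigma : {perm edge g})
  (vb : V * bool) (e : edge g) : bool :=
  if vb.2 then vb.1 \in val (sigma e) else vb.1 \in val e.

Definition odd_bip (VB WB : finType) (adj : VB -> WB -> bool) : Prop :=
  forall X : {set WB}, X != set0 ->
    exists v : VB, odd #|[set w in X | adj v w]|.

(* Main.v *)
Require Import Defs.
From mathcomp Require Import all_boot all_fingroup.

Lemma deg_le3 (V : finType) (g : rel V) (C : {set edge g}) v :
  cubic g -> #|[set e in C | v \in val e]| <= 3.
Proof.
move=> cub. rewrite -(cub v).
pose f (e : edge g) := odflt v [pick w in val e :\ v].
have Hf: forall e : edge g, v \in val e -> f e \in val e :\ v.
  move=> e ve. rewrite /f. case: pickP => [w //|H0] /=.
  exfalso. have: #|val e :\ v| = 1.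
    have := cardsD1 v (val e). case/andP: (valP e) => /eqP -> _. rewrite ve. by case.
  by rewrite (eq_card0 H0).
rewrite -(card_in_imset (f:=f)).
  apply: subset_leq_card. apply/subsetP => w /imsetP [e]. rewrite inE => /andP [_ ve] ->.
  have := Hf e ve. rewrite in_setD1 => /andP [wv we]. rewrite inE.
  case/andP: (valP e) => _ /forallP /(_ v) /implyP /(_ ve) /forallP /(_ (f e)) /implyP /(_ we) /implyP.
  apply. by rewrite eq_sym.
move=> e1 e2. rewrite !inE => /andP[_ v1] /andP[_ v2] fe.
have h1 := Hf e1 v1; have h2 := Hf e2 v2. rewrite fe in h1.
apply: val_inj.
suff key: forall e : edge g, v \in val e -> f e2 \in val e :\ v -> val e = [set v; f e2].
  by rewrite (key e1 v1 h1) (key e2 v2 h2).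
move=> e ve. rewrite in_setD1 => /andP[wv we]. apply/eqP; rewrite eq_sym eqEcard.
have vw : v != f e2 by rewrite eq_sym.
rewrite cards2 vw. case/andP: (valP e) => /eqP -> _. rewrite leqnn andbT.
apply/subsetP => x; rewrite !inE => /orP[]/eqP-> //.
Qed.

Lemma even_le3 n : n <= 3 -> ~~ odd n -> n = 0 \/ n = 2.
Proof. by case: n => [|[|[|[|]]]] //; auto. Qed.

Theorem mainTheorem5 (V : finType) (g : rel V) (sigma : {perm edge g}) :
  simple_graph g -> cubic g ->
  (~ odd_bip (B_adj sigma) <->
   exists C : {set edge g},
     [/\ C != set0, two_regular C & two_regular (sigma @: C)]).
Proof.
move=> _ cub.
have sig_card: forall (C : {set edge g}) v,
    #|[set w in C | B_adj sigma (v,true) w]| = #|[set e in sigma @: C | v \in val e]|.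
  move=> C v. rewrite /B_adj /=.
  rewrite -[LHS](card_imset _ (@perm_inj _ sigma)). congr #|pred_of_set _|.
  apply/setP => e. rewrite inE. apply/imsetP/andP.
  - case=> x; rewrite inE => /andP[xC vx] ->. split => //. exact: imset_f.
  - case=> /imsetP [x xC ->] vx. exists x => //. by rewrite inE xC.
split.
- move=> nodd.
  case: (boolP [exists X : {set edge g}, (X != set0) &&
           [forall vb, ~~ odd #|[set w in X | B_adj sigma vb w]|]]).
  + case/existsP => X /andP [Xn /forallP H]. exists X; split => //.
    * move=> v /=. apply: even_le3; first exact: deg_le3.
      have := H (v,false). by rewrite /B_adj.
    * move=> v /=. apply: even_le3; first exact: deg_le3.
      rewrite -sig_card. exact: H (v,true).
  + move=> /existsPn H. exfalso; apply: nodd => X Xn.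
    have := H X. rewrite Xn /= => /forallPn [vb Hvb]. exists vb. by rewrite negbK in Hvb.
- case=> C [Cn h1 h2] Hodd. case: (Hodd C Cn) => [[v []]].
  + rewrite sig_card. by case: (h2 v) => ->.
  + rewrite /B_adj /=. by case: (h1 v) => ->.
Qed.
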